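(* Let $\mathbf p$ be a critical reproduction law with finite variance $\sigma^2$. Suppose that its tail distribution satisfies $\bar F(x)>0$ for all $x>0$ and $$\lim_{y\to\infty}\limsup_{x\to\infty}\frac{\bar F(xy)}{\bar F(x)}=0.$$ Then $$\mathbb{P}(X^\ast_1>x)\sim\sqrt{2\bar F(x)/\sigma^2}\qquad\text{as }x\to\infty.$$
   Context: $\mathbf p=(p(n))_{n\in\mathbb{N}}$ is a probability measure on the nonnegative integers with $\sum_n np(n)=1$ (criticality), $\mathbf p\ne\delta_1$, and variance $\sigma^2=\sum_n n^2p(n)-1<\infty$. For real $x$, $\bar F(x)=\sum_{n>x}p(n)$. Consider a Galton–Watson process with reproduction law $\mathbf p$ started from one ancestor; $T_1$ is its total population size (ancestor included), $X_1,\dots,X_{T_1}$ are the numbers of children of its individuals (in some arbitrary enumeration), and $X^\ast_1=\max\{X_i:1\le i\le T_1\}$. *)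

(* Defs.v *)
From HB Require Import structures.
From mathcomp Require Import all_boot all_order all_algebra.
From mathcomp Require Import all_classical all_reals all_analysis.
Set Implicit Arguments. Unset Strict Implicit. Unset Printing Implicit Defensive.
Import Order.TTheory GRing.Theory Num.Theory.
Local Open Scope classical_set_scope.
Local Open Scope ring_scope.

Inductive ptree := PNode of seq ptree.
HB.instance Definition _ := gen_eqMixin ptree.
HB.instance Definition _ := gen_choiceMixin ptree.

Definition root_deg (t : ptree) : nat := let: PNode ts := t in size ts.

Fixpoint tsize (t : ptree) : nat :=
  let: PNode ts := t in (foldr (fun c acc => tsize c + acc) 0 ts).+1.

Fixpoint maxdeg (t : ptree) : nat :=
  let: PNode ts := t in foldr (fun c acc => maxn (maxdeg c) acc) (size ts) ts.

(* Galton-Watson law of a (finite) plane tree: product over all vertices v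
   of p(k_v), k_v the number of children of v. *)
Fixpoint gw_weight (R : realType) (p : nat -> R) (t : ptree) : R :=
  let: PNode ts := t in p (size ts) * foldr (fun c acc => gw_weight p c * acc) 1 ts.

Definition gw_max_tail (R : realType) (p : nat -> R) (x : R) : R :=
  fine (\esum_(t in [set t : ptree | x < (maxdeg t)%:R]) (gw_weight p t)%:E).

Definition is_prob_nat (R : realType) (p : nat -> R) : Prop :=
  (forall n, 0 <= p n) /\ (\esum_(n in [set: nat]) (p n)%:E = 1)%E.

Definition offspring_mean (R : realType) (p : nat -> R) : \bar R :=
  \esum_(n in [set: nat]) (n%:R * p n)%:E.

Definition offspring_moment2 (R : realType) (p : nat -> R) : \bar R :=
  \esum_(n in [set: nat]) ((n ^ 2)%:R * p n)%:E.

Definition offspring_variance (R : realType) (p : nat -> R) : R := fine (offspring_moment2 p) - 1.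

Definition Fbar (R : realType) (p : nat -> R) (x : R) : R :=
  fine (\esum_(n in [set n : nat | x < n%:R]) (p n)%:E).

(* Main.v *)
Require Import Defs.
From HB Require Import structures.
From mathcomp Require Import all_boot all_order all_algebra.
From mathcomp Require Import all_classical all_reals all_analysis.
From mathcomp Require Import ring lra.
Import Order.TTheory GRing.Theory Num.Theory.
Local Open Scope classical_set_scope.
Import numFieldNormedType.Exports.
Local Open Scope ring_scope.
Set Implicit Arguments. Unset Strict Implicit. Unset Printing Implicit Defensive.
Section S.
Context (R : realType).
Local Open Scope ereal_scope.
Lemma esumZl (T : choiceType) (I : set T) (a : T -> \bar R) (r : R) :
  (0 <= r)%R -> (forall i, 0 <= a i) ->
  \esum_(i in I) (r%:E * a i) = r%:E * \esum_(i in I) a i.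
Proof.
move=> r0 a0; rewrite /esum -ereal_supZl//; last first.
  by apply/set0P; exists 0; exists set0; [exact: fsets_set0|rewrite fsbig_set0].
congr ereal_sup; apply/seteqP; split=> x /=.
  by move=> [F FI <-]; exists (\sum_(i \in F) a i); [exists F|rewrite ge0_mule_fsumr].
by move=> [y [F FI <-] <-]; exists F => //; rewrite ge0_mule_fsumr.
Qed.
Lemma esum_sub (T : choiceType) (I J : set T) (a : T -> \bar R) :
  I `<=` J -> (forall i, 0 <= a i) -> \esum_(i in I) a i <= \esum_(i in J) a i.
Proof.
move=> IJ a0; rewrite [leLHS]esum_mkcond [leRHS]esum_mkcond; apply: le_esum => i _.
case: ifPn => iI; first by rewrite ifT// inE; apply: IJ; rewrite -inE.
by case: ifP.
Qed.
End S.
Fixpoint okdeg (D : nat -> bool) (t : ptree) : bool :=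
  let: PNode ts := t in D (size ts) && all (okdeg D) ts.
Fixpoint height (t : ptree) : nat :=
  let: PNode ts := t in foldr (fun c acc => maxn (height c).+1 acc) 0 ts.
Definition Wseq (R : realType) (p : nat -> R) (ts : seq ptree) : R :=
  foldr (fun c acc => gw_weight p c * acc) 1 ts.

Lemma height_node ts n : (height (PNode ts) < n.+1)%N = all (fun t => height t < n)%N ts.
Proof. by elim: ts => //= t ts IH; rewrite gtn_max IH ltnS. Qed.

Lemma maxdeg_node ts m : (maxdeg (PNode ts) <= m)%N = (size ts <= m)%N && all (fun t => maxdeg t <= m)%N ts.
Proof.
elim: ts => //= t ts IH; rewrite geq_max.
have -> : (foldr (fun c acc => maxn (maxdeg c) acc) (size ts).+1 ts <= m)%N =
          ((size ts).+1 <= m)%N && all (fun t => maxdeg t <= m)%N ts.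
  elim: ts {IH} (size ts).+1 => //= [k|t' ts IH k]; first by rewrite andbT.
  by rewrite geq_max IH andbCA.
by rewrite andbCA.
Qed.
Lemma ptree_ind' (P : ptree -> Prop) :
  (forall ts, (forall t, t \in ts -> P t) -> P (PNode ts)) -> forall t, P t.
Proof.
move=> H; fix IH 1 => -[ts]; apply: H.
elim: ts => [|t ts IHs] u; first (rewrite in_nil => h; discriminate h).
rewrite inE => /orP[/eqP->|/IHs//]; exact: IH.
Qed.

Lemma maxdeg_okdeg m t : (maxdeg t <= m)%N = okdeg (fun k => k <= m)%N t.
Proof.
elim/ptree_ind': t => ts IH; rewrite maxdeg_node /=; congr (_ && _).
by apply: eq_in_all => t /IH.
Qed.
Section Tree.
Context (R : realType) (p : nat -> R) (p0 : forall n, (0 <= p n)%R).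
Local Open Scope ereal_scope.

Lemma gw_ge0 t : (0 <= gw_weight p t)%R.
Proof.
elim/ptree_ind': t => ts IH /=; apply: mulr_ge0 => //.
elim: ts IH => //= t ts IHs H; apply: mulr_ge0; first by apply: H; rewrite inE eqxx.
by apply: IHs => u uts; apply: H; rewrite inE uts orbT.
Qed.

Lemma Wseq_ge0 ts : (0 <= Wseq p ts)%R.
Proof. by elim: ts => //= t ts IH; rewrite mulr_ge0// gw_ge0. Qed.

Definition Lset (C : set ptree) k :=
  [set ts : seq ptree | size ts = k /\ (forall t, t \in ts -> C t)].

Lemma esumL C c k : \esum_(t in C) (gw_weight p t)%:E = c%:E ->
  \esum_(ts in Lset C k) (Wseq p ts)%:E = (c ^+ k)%:E.
Proof.
move=> hC; have c0 : (0 <= c)%R.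
  by rewrite -lee_fin -hC esum_ge0// => t _; rewrite lee_fin gw_ge0.
elim: k => [|k IH].
  rewrite (_ : Lset C 0 = [set [::]]); first by rewrite esum_set1.
  apply/seteqP; split => [ts [/size0nil -> _]//|ts ->]; split => // t.
rewrite (_ : Lset C k.+1 = (fun pr => pr.1 :: pr.2) @` (C `*` Lset C k)); last first.
  apply/seteqP; split => [ts [sz Hts]|ts [[t ts'] [/= Ct [sz Hts']] <-]].
    case: ts sz Hts => // t ts [sz] Hts; exists (t, ts) => //; split => /=.
      by apply: Hts; rewrite inE eqxx.
    by split => // u uts; apply: Hts; rewrite inE uts orbT.
  split; first by rewrite /= sz.
  by move=> u; rewrite inE => /orP[/eqP->//|/Hts'].
rewrite esum_image; last by move=> [a b] [a' b'] _ _ /= [-> ->].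
rewrite /= -(@esum_esum _ _ _ C (fun=> Lset C k) (fun t ts => (gw_weight p t * Wseq p ts)%:E)); last first.
  by move=> i j _ _; rewrite lee_fin mulr_ge0 ?gw_ge0 ?Wseq_ge0.
under eq_esum do under eq_esum do rewrite EFinM.
rewrite (@eq_esum _ _ _ _ (fun i => (c^+k)%:E * (gw_weight p i)%:E)); last first.
  move=> i _; rewrite esumZl ?gw_ge0 ?IH 1?muleC// => j; rewrite lee_fin Wseq_ge0//.
have /= -> := @esumZl _ _ C (fun i => (gw_weight p i)%:E) (c ^+ k) (exprn_ge0 k c0).
  2: by move=> i; rewrite lee_fin gw_ge0.
by rewrite hC -EFinM exprS mulrC.
Qed.

Lemma esum_node C c (D : nat -> bool) : \esum_(t in C) (gw_weight p t)%:E = c%:E ->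
  \esum_(t in [set PNode ts | ts in [set ts | D (size ts) /\ forall t, t \in ts -> C t]])
     (gw_weight p t)%:E
  = \esum_(k in [set k | D k]) ((p k)%:E * (c ^+ k)%:E).
Proof.
move=> hC; rewrite esum_image; last by move=> a b _ _ [].
rewrite /= (reindex_esum ([set k | D k] `*`` Lset C) _ snd); last first.
  split.
  - by move=> [k ts] [/= Dk [sz Hts]]; split => //; rewrite sz.
  - by move=> [k ts] [k' ts'] /set_mem/= [_ [sz _]] /set_mem/= [_ [sz' _]] /= E; rewrite -sz -sz' E.
  - by move=> ts [Dts Hts]; exists (size ts, ts).
rewrite -(@esum_esum _ _ _ [set k | D k] (Lset C) (fun k ts => (p (size ts) * Wseq p ts)%:E)); last first.
  by move=> i j _ _; rewrite lee_fin mulr_ge0 ?Wseq_ge0.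
apply: eq_esum => k Dk.
rewrite (@eq_esum _ _ _ _ (fun ts => (p k)%:E * (Wseq p ts)%:E)); last first.
  by move=> ts [sz _]; rewrite sz EFinM.
by rewrite esumZl// ?(esumL _ hC)// => ts; rewrite lee_fin Wseq_ge0.
Qed.
End Tree.
Lemma finite_height_bound (F : set ptree) : finite_set F ->
  exists N, forall t, F t -> (height t < N)%N.
Proof.
move=> fF; exists (\max_(t <- finmap.enum_fset (fset_set F)) (height t).+1)%N => t Ft.
apply: (leq_trans _ (leq_bigmax_seq _ _ _)) => //.
by rewrite in_fset_set// inE.
Qed.

Section TreeD.
Context (R : realType) (p : nat -> R) (p0 : forall n, (0 <= p n)%R).
Context (p1 : (\esum_(n in [set: nat]) (p n)%:E = 1)%E).
Context (Dn : nat -> bool).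
Local Open Scope ereal_scope.

Definition Sset := [set t | okdeg Dn t].
Definition Cset n := [set t | okdeg Dn t /\ (height t < n)%N].

Lemma Cset_succ n : Cset n.+1 =
  PNode @` [set ts | Dn (size ts) /\ forall t, t \in ts -> Cset n t].
Proof.
apply/seteqP; split => [[ts] [/= /andP[Dts Ats] hts]|t [ts [Dts Hts] <-]].
  exists ts => //; split => // t tts; split; first exact: (allP Ats).
  by move: hts; rewrite height_node => /allP/(_ _ tts).
split; first by rewrite /= Dts; apply/allP => u /Hts [].
by rewrite height_node; apply/allP => u /Hts [].
Qed.

Lemma Sset_node : Sset =
  PNode @` [set ts | Dn (size ts) /\ forall t, t \in ts -> Sset t].
Proof.
apply/seteqP; split => [[ts] /= /andP[Dts Ats]|t [ts [Dts Hts] <-]].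
  by exists ts => //; split => // t tts; exact: (allP Ats).
by rewrite /Sset /= Dts; apply/allP => u /Hts.
Qed.

Lemma fix_le1 c : (0 <= c <= 1)%R ->
  \esum_(k in [set k | Dn k]) ((p k)%:E * (c ^+ k)%:E) <= 1.
Proof.
move=> /andP[c0 c1]; rewrite -p1.
apply: (@le_trans _ _ (\esum_(k in [set: nat]) ((p k)%:E * (c ^+ k)%:E))).
  by apply: esum_sub => // k; rewrite -EFinM lee_fin mulr_ge0// exprn_ge0.
apply: le_esum => k _; rewrite -EFinM lee_fin ler_piMr// exprn_ile1//.
Qed.

Lemma esum_Cset n : exists c, (0 <= c <= 1)%R /\
  \esum_(t in Cset n) (gw_weight p t)%:E = c%:E.
Proof.
elim: n => [|n [c [c01 hc]]].
  exists 0%R; rewrite lexx ler01; split => //.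
  by rewrite (_ : Cset 0 = set0) ?esum_set0//; apply/seteqP; split => t [].
rewrite Cset_succ (esum_node p0 _ hc).
set e := esum _ _.
have /andP[c0 c1] := c01.
have e0 : 0 <= e by apply: esum_ge0 => k _; rewrite -EFinM lee_fin mulr_ge0// exprn_ge0.
have e1 : e <= 1 by apply: fix_le1.
have fe : e \is a fin_num by rewrite ge0_fin_numE// (le_lt_trans e1) ?ltry.
exists (fine e); rewrite fineK//; split => //.
by rewrite fine_ge0//= -lee_fin fineK.
Qed.

Lemma esum_Sset_le1 : \esum_(t in Sset) (gw_weight p t)%:E <= 1.
Proof.
apply: ge_ereal_sup => _ [F [fF FS] <-].
have [N HN] := finite_height_bound fF.
have [c [/andP[_ c1] hc]] := esum_Cset N.
apply: (@le_trans _ _ (\esum_(t in Cset N) (gw_weight p t)%:E)); last by rewrite hc lee_fin.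
apply: ereal_sup_ubound; exists F => //; split => // t Ft; split; [exact: FS|exact: HN].
Qed.

Lemma Sset_fix : exists c, (0 <= c <= 1)%R /\
  (\esum_(t in Sset) (gw_weight p t)%:E = c%:E) /\
  (c%:E = \esum_(k in [set k | Dn k]) ((p k)%:E * (c ^+ k)%:E)).
Proof.
set e := esum _ _.
have e0 : 0 <= e by apply: esum_ge0 => t _; rewrite lee_fin gw_ge0.
have e1 := esum_Sset_le1.
have fe : e \is a fin_num by rewrite ge0_fin_numE// (le_lt_trans e1) ?ltry.
exists (fine e); rewrite fine_ge0//= -lee_fin fineK//; split => //; split => //.
by rewrite /e {1}Sset_node (esum_node p0 _ (esym (fineK fe))).
Qed.
End TreeD.
Section Poly.
Context (R : realType).
Definition phi (k : nat) (u : R) := (1 - u) ^+ k - 1 + k%:R * u.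

Lemma bk_bounds (k : nat) (u : R) : 0 <= u <= 1 ->
  k%:R * u - k%:R * (k%:R - 1) / 2 * u ^+ 2 <= 1 - (1 - u) ^+ k <= k%:R * u.
Proof.
move=> /andP[u0 u1]; elim: k => [|k /andP[IH1 IH2]]; first by rewrite !mul0r subrr expr0 subrr lexx.
rewrite [(1 - u) ^+ k.+1]exprS -natr1.
have h : 1 - (1 - u) * (1 - u) ^+ k = u + (1 - u) * (1 - (1 - u) ^+ k) by ring.
rewrite h; apply/andP; split.
  have := ler_wpM2l (_ : 0 <= 1 - u) IH1; rewrite subr_ge0 => /(_ u1) H.
  apply: le_trans (lerD (lexx u) H); rewrite -subr_ge0.
  have -> : u + (1 - u) * (k%:R * u - k%:R * (k%:R - 1) / 2 * u ^+ 2) -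
     ((k%:R + 1) * u - (k%:R + 1) * (k%:R + 1 - 1) / 2 * u ^+ 2) = k%:R * (k%:R - 1) / 2 * u ^+ 3 by field.
  have k0 : 0 <= k%:R * (k%:R - 1) :> R.
    by case: k {IH1 IH2 h H} => [|k]; rewrite ?mul0r// mulr_ge0// -natr1 addrK.
  by rewrite mulr_ge0 ?divr_ge0// exprn_ge0.
have := ler_wpM2l (_ : 0 <= 1 - u) IH2; rewrite subr_ge0 => /(_ u1) H.
apply: le_trans (lerD (lexx u) H) _; rewrite -subr_ge0.
have -> : (k%:R + 1) * u - (u + (1 - u) * (k%:R * u)) = k%:R * u ^+ 2 by ring.
by rewrite mulr_ge0// exprn_ge0.
Qed.

Lemma phi_bounds (k : nat) (u : R) : 0 <= u <= 1 ->
  [/\ 0 <= phi k u, phi k u <= k%:R * (k%:R - 1) / 2 * u ^+ 2 &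
   k%:R * (k%:R - 1) / 2 * u ^+ 2 * (1 - k%:R * u) <= phi k u].
Proof.
move=> u01; have /andP[u0 u1] := u01.
suff: [/\ 0 <= phi k u, phi k u <= k%:R * (k%:R - 1) / 2 * u ^+ 2 &
   k%:R * (k%:R - 1) / 2 * u ^+ 2 - k%:R * (k%:R - 1) * (k%:R - 2) / 6 * u ^+ 3 <= phi k u].
  case=> -> -> H; split => //; apply: le_trans H; rewrite -subr_ge0.
  have -> : k%:R * (k%:R - 1) / 2 * u ^+ 2 - k%:R * (k%:R - 1) * (k%:R - 2) / 6 * u ^+ 3 -
    k%:R * (k%:R - 1) / 2 * u ^+ 2 * (1 - k%:R * u) = k%:R * (k%:R - 1) * (2 * k%:R + 2) / 6 * u ^+ 3 by field.
  have k0 : 0 <= k%:R * (k%:R - 1) :> R.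
    by case: k => [|k]; rewrite ?mul0r// mulr_ge0// -natr1 addrK.
  apply: mulr_ge0; last exact: exprn_ge0.
  apply: divr_ge0 => //; apply: mulr_ge0 => //.
elim: k => [|k [IH1 IH2 IH3]].
  have -> : phi 0 u = 0 by rewrite /phi; ring.
  by rewrite (_ : (0%:R : R) = 0)// !mul0r subrr; split.
have rec : phi k.+1 u = phi k u + u * (1 - (1 - u) ^+ k).
  by rewrite /phi exprS -natr1; ring.
have /andP[B1 B2] := bk_bounds k u01.
rewrite rec -natr1; split.
- apply: addr_ge0 => //; apply: mulr_ge0 => //; rewrite subr_ge0.
  by apply: exprn_ile1; lra.
- apply: le_trans (lerD IH2 (ler_wpM2l u0 B2)) _; rewrite -subr_ge0.
  have -> : (k%:R + 1) * (k%:R + 1 - 1) / 2 * u ^+ 2 -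
    (k%:R * (k%:R - 1) / 2 * u ^+ 2 + u * (k%:R * u)) = 0 by field.
  by [].
- apply: le_trans (lerD IH3 (ler_wpM2l u0 B1)); rewrite -subr_ge0.
  have -> : k%:R * (k%:R - 1) / 2 * u ^+ 2 - k%:R * (k%:R - 1) * (k%:R - 2) / 6 * u ^+ 3 +
     u * (k%:R * u - k%:R * (k%:R - 1) / 2 * u ^+ 2) -
   ((k%:R + 1) * (k%:R + 1 - 1) / 2 * u ^+ 2 -
    (k%:R + 1) * (k%:R + 1 - 1) * (k%:R + 1 - 2) / 6 * u ^+ 3) = 0 by field.
  by [].
Qed.

Lemma phi_ge2 (k : nat) (u : R) : 0 <= u <= 1 -> (2 <= k)%N -> u ^+ 2 <= phi k u.
Proof.
move=> u01; have /andP[u0 u1] := u01.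
elim: k => // k IH; rewrite leq_eqVlt => /orP[/eqP[<-]|]; first by have -> : phi 2 u = u ^+ 2 by rewrite /phi; ring.
rewrite ltnS => /IH h; apply: le_trans h _.
have -> : phi k.+1 u = phi k u + u * (1 - (1 - u) ^+ k) by rewrite /phi exprS -natr1; ring.
rewrite lerDl; apply: mulr_ge0 => //; rewrite subr_ge0.
by apply: exprn_ile1; lra.
Qed.
End Poly.
Section Main.
Context (R : realType) (p : nat -> R) (p0 : forall n, (0 <= p n)%R).
Context (p1 : (\esum_(n in [set: nat]) (p n)%:E = 1)%E).
Context (pm : (\esum_(n in [set: nat]) (n%:R * p n)%:E = 1)%E).
Local Open Scope ereal_scope.

Lemma identity (D : nat -> bool) (u : R) : (0 <= u <= 1)%R ->
  (1 - u)%:E = \esum_(k in [set k | D k]) ((p k)%:E * ((1 - u) ^+ k)%:E) ->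
  \esum_(k in [set: nat]) (p k * phi k u)%:E =
  \esum_(k in [set k | ~~ D k]) (p k * (1 - u) ^+ k)%:E.
Proof.
move=> u01 hfix; have /andP[u0 u1] := u01.
have c0 : (0 <= 1 - u)%R by rewrite subr_ge0.
have a0 k : 0 <= (p k * (1 - u) ^+ k)%:E by rewrite lee_fin mulr_ge0// exprn_ge0.
have E1 : \esum_(k in [set: nat]) (p k * (1 - u) ^+ k)%:E =
    (1 - u)%:E + \esum_(k in [set k | ~~ D k]) (p k * (1 - u) ^+ k)%:E.
  rewrite (esumID [set k | D k])//; congr (_ + _).
    rewrite setTI hfix (@eq_esum _ _ _ _ (fun k => (p k)%:E * ((1 - u) ^+ k)%:E))// => k _; rewrite EFinM.
  by rewrite setTI; congr esum; apply/seteqP; split => k /=; move/negP.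
have E2 : \esum_(k in [set: nat]) ((p k * (1 - u) ^+ k)%:E + u%:E * (k%:R * p k)%:E) =
   \esum_(k in [set: nat]) (p k * (1 - u) ^+ k)%:E + u%:E.
  rewrite esumD//; last by move=> k _; rewrite -EFinM lee_fin mulr_ge0// mulr_ge0.
  by rewrite esumZl// ?pm ?mule1// => k; rewrite lee_fin mulr_ge0.
have E3 : \esum_(k in [set: nat]) ((p k * (1 - u) ^+ k)%:E + u%:E * (k%:R * p k)%:E) =
   1 + \esum_(k in [set: nat]) (p k * phi k u)%:E.
  rewrite -p1 -esumD; first last.
  - by move=> k _; have [h _ _] := phi_bounds k u01; rewrite lee_fin mulr_ge0.
  - by move=> k _; rewrite lee_fin.
  apply: eq_esum => k _; rewrite -!EFinM -!EFinD /phi; congr (_%:E); ring.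
have : 1 + \esum_(k in [set: nat]) (p k * phi k u)%:E =
   1 + \esum_(k in [set k | ~~ D k]) (p k * (1 - u) ^+ k)%:E.
  by rewrite -E3 E2 E1 addeAC -EFinD subrK.
move/(congr1 (fun z => z - 1)); rewrite !(addeC 1) !addeK//.
Qed.
End Main.
Section Aux.
Context (R : realType).
Local Open Scope ereal_scope.

Lemma ev_lt (T : Type) (F : set_system T) (f : T -> \bar R) (e : R) :
  f @ F --> 0%E -> (0 < e)%R -> \forall x \near F, f x < e%:E.
Proof.
move=> fF e0.
have H : \forall y \near (0%R:R)%R, (y%:E < e%:E) by apply: filterS (lt_nbhsl e0) => y; rewrite lte_fin.
have H' := (@nbhs_EFin R (fun y => y < e%:E) (0%R:R)%R).2 H.
exact: (fF _ H').
Qed.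

Lemma esum_tail (a : nat -> \bar R) : (forall k, 0 <= a k) ->
  \esum_(k in [set: nat]) a k < +oo -> forall e : R, (0 < e)%R ->
  exists N, \esum_(k in [set k | (N <= k)%N]) a k <= e%:E.
Proof.
move=> a0 fin e e0.
have := @nneseries_tail_cvg R a xpredT.
rewrite nneseries_esumT// => /(_ fin (fun k _ => a0 k)) /ev_lt /(_ e0) [N _ HN].
exists N; apply/ltW; have := HN N (leqnn N) => /=.
by rewrite eseries_cond nneseries_esum.
Qed.
End Aux.
Lemma okdeg_maxdeg (Dn : nat -> bool) :
  (forall j k, (j <= k)%N -> Dn k -> Dn j) ->
  forall t, okdeg Dn t = Dn (maxdeg t).
Proof.
move=> down.
have Dmax a b : Dn (maxn a b) = Dn a && Dn b.
  apply/idP/andP => [h|[ha hb]]; first by split; apply: down h; rewrite ?leq_maxl ?leq_maxr.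
  by case: (leqP a b).
elim/ptree_ind' => ts IH /=.
have -> : all (okdeg Dn) ts = all (fun t => Dn (maxdeg t)) ts by apply: eq_in_all => t /IH.
elim: ts (size ts) {IH} => [|t ts IHs] b /=; first by rewrite andbT.
by rewrite Dmax -IHs andbCA.
Qed.

Lemma okdegT t : okdeg (fun _ => true) t.
Proof.
by rewrite (@okdeg_maxdeg (fun _ => true)).
Qed.
Section Main2.
Context (R : realType) (p : nat -> R) (p0 : forall n, (0 <= p n)%R).
Context (p1 : (\esum_(n in [set: nat]) (p n)%:E = 1)%E).
Context (pm : (\esum_(n in [set: nat]) (n%:R * p n)%:E = 1)%E).
Context (hp1 : p 1%N != 1).
Local Open Scope ereal_scope.

Lemma K_exists : exists K, (2 <= K)%N /\ (0 < p K)%R.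
Proof.
apply: contrapT => hK.
have hz k : (2 <= k)%N -> p k = 0%R.
  move=> k2; apply/eqP; rewrite eq_le p0 andbT leNgt; apply/negP => pk.
  by apply: hK; exists k.
have : \esum_(n in [set: nat]) (n%:R * p n)%:E = (p 1%N)%:E.
  rewrite (esumID [set 1%N]); last by move=> k _; rewrite lee_fin mulr_ge0.
  rewrite setTI esum_set1 ?lee_fin ?mulr_ge0// mul1r esum1 ?adde0// => k [_ /= k1].
  case: k k1 => [|[|k]] k1; [by rewrite mul0r|by exfalso; apply: k1|by rewrite hz ?mulr0].
rewrite pm => /esym /eqP; rewrite eqe => /eqP p11.
by move: hp1; rewrite p11 eqxx.
Qed.

Lemma H_ge_pK K u : (0 <= u <= 1)%R -> (2 <= K)%N ->
  (p K * u ^+ 2)%:E <= \esum_(k in [set: nat]) (p k * phi k u)%:E.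
Proof.
move=> u01 K2; apply: (@le_trans _ _ (\esum_(k in [set K]) (p k * phi k u)%:E)).
  have [h _ _] := phi_bounds K u01.
  by rewrite esum_set1 ?lee_fin ?ler_wpM2l ?phi_ge2// mulr_ge0.
apply: esum_sub => // k; have [h _ _] := phi_bounds k u01.
by rewrite lee_fin mulr_ge0.
Qed.

Lemma u_eq0 u : (0 <= u <= 1)%R ->
  \esum_(k in [set: nat]) (p k * phi k u)%:E <= 0 -> u = 0%R.
Proof.
move=> u01 H; have [K [K2 pK]] := K_exists.
have := le_trans (H_ge_pK u01 K2) H; rewrite lee_fin pmulr_rle0// => u2.
by apply/eqP; rewrite -sqrf_eq0 eq_le u2 sqr_ge0.
Qed.

Lemma total_mass : \esum_(t in [set: ptree]) (gw_weight p t)%:E = 1.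
Proof.
have [c [c01 [hS hfix]]] := Sset_fix p0 p1 (fun _ => true).
have hS' : Sset (fun _ => true) = setT by apply/seteqP; split => // t _; exact: okdegT.
have u01 : (0 <= 1 - c <= 1)%R by move: c01 => /andP[? ?]; apply/andP; split; lra.
have := @identity R p p0 p1 pm (fun _ => true) (1 - c) u01.
rewrite opprB addrC subrK => /(_ _).
have -> : \esum_(k in [set k | (fun=> true) k]) ((p k)%:E * (c ^+ k)%:E) =
          \esum_(k in [set k | (fun=> true) k]) ((p k)%:E * (c ^+ k)%:E) by [].
move=> /(_ hfix).
rewrite (_ : [set k | ~~ (fun=> true) k] = set0); last by apply/seteqP; split.
rewrite esum_set0 => H0; have := u_eq0 u01; rewrite H0 lexx => /(_ isT) /eqP.
rewrite subr_eq0 => /eqP c1.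
by rewrite -hS' hS -c1.
Qed.
End Main2.
Section Main3.
Context (R : realType) (p : nat -> R) (p0 : forall n, (0 <= p n)%R).
Context (p1 : (\esum_(n in [set: nat]) (p n)%:E = 1)%E).
Context (pm : (\esum_(n in [set: nat]) (n%:R * p n)%:E = 1)%E).
Context (hp1 : p 1%N != 1).
Local Open Scope ereal_scope.

Lemma Fb_fin x : \esum_(k in [set k | (x < k%:R)%R]) (p k)%:E = (Fbar p x)%:E.
Proof.
rewrite /Fbar fineK// ge0_fin_numE ?esum_ge0// => [|k _]; last by rewrite lee_fin.
apply: (@le_lt_trans _ _ (\esum_(k in [set: nat]) (p k)%:E)); last by rewrite p1 ltry.
by apply: esum_sub => // k; rewrite lee_fin.
Qed.

Lemma key x : let u := gw_max_tail p x in (0 <= u <= 1)%R /\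
   \esum_(k in [set: nat]) (p k * phi k u)%:E =
   \esum_(k in [set k | (x < k%:R)%R]) (p k * (1 - u) ^+ k)%:E.
Proof.
pose Dx := fun k : nat => (k%:R <= x)%R.
have down j k : (j <= k)%N -> Dx k -> Dx j.
  by move=> jk; apply: le_trans; rewrite ler_nat.
have [c [c01 [hS hfix]]] := Sset_fix p0 p1 Dx.
have hc : \esum_(t in [set t | (x < (maxdeg t)%:R)%R]) (gw_weight p t)%:E = (1 - c)%:E.
  have := total_mass p0 p1 pm hp1.
  rewrite (esumID (Sset Dx)); last by move=> t _; rewrite lee_fin gw_ge0.
  rewrite setTI hS (_ : _ `&` _ = [set t | (x < (maxdeg t)%:R)%R]); last first.
    apply/seteqP; split => t /=.
      by move=> [_ /negP]; rewrite /Sset /= (okdeg_maxdeg down) /Dx -ltNge.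
    by move=> xt; split => //; apply/negP; rewrite /Sset /= (okdeg_maxdeg down) /Dx -ltNge.
  move/(congr1 (fun z => z - c%:E)); rewrite addeC addeK// => <-.
have hu : gw_max_tail p x = (1 - c)%R by rewrite /gw_max_tail hc.
rewrite /= hu; split; first by move: c01 => /andP[? ?]; apply/andP; split; lra.
have u01 : (0 <= 1 - c <= 1)%R by move: c01 => /andP[? ?]; apply/andP; split; lra.
have := @identity R p p0 p1 pm Dx (1 - c) u01.
rewrite opprB addrC subrK => /(_ hfix) ->.
congr esum; apply/seteqP; split => k /=; rewrite /Dx.
  by rewrite ltNge.
by rewrite ltNge.
Qed.

Lemma T_le x u : (0 <= u <= 1)%R ->
  \esum_(k in [set k | (x < k%:R)%R]) (p k * (1 - u) ^+ k)%:E <= (Fbar p x)%:E.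
Proof.
move=> /andP[u0 u1]; rewrite -Fb_fin; apply: le_esum => k _.
by rewrite lee_fin ler_piMr// exprn_ile1//; lra.
Qed.

Context (hM2 : offspring_moment2 p < +oo).

Lemma S2E : \esum_(k in [set: nat]) (k%:R * (k%:R - 1) * p k)%:E =
  (offspring_variance p)%:E.
Proof.
have kk0 (k : nat) : (0 <= k%:R * (k%:R - 1) :> R)%R.
  by case: k => [|k]; rewrite ?mul0r// mulr_ge0// -natr1 addrK.
have E : offspring_moment2 p = \esum_(k in [set: nat]) (k%:R * (k%:R - 1) * p k)%:E + 1.
  rewrite /offspring_moment2 -pm -esumD; last 2 first.
  - by move=> k _; rewrite lee_fin mulr_ge0.
  - by move=> k _; rewrite lee_fin mulr_ge0.
  by apply: eq_esum => k _; rewrite -EFinD natrX; congr (_%:E); ring.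
have S0 : 0 <= \esum_(k in [set: nat]) (k%:R * (k%:R - 1) * p k)%:E.
  by apply: esum_ge0 => k _; rewrite lee_fin mulr_ge0.
have Sf : \esum_(k in [set: nat]) (k%:R * (k%:R - 1) * p k)%:E \is a fin_num.
  rewrite ge0_fin_numE//; apply: le_lt_trans hM2; rewrite E leeDl//.
rewrite /offspring_variance E -(fineK Sf) -EFinD /= addrK.
by [].
Qed.

Lemma H_le u : (0 <= u <= 1)%R ->
  \esum_(k in [set: nat]) (p k * phi k u)%:E <=
  (u ^+ 2 / 2 * offspring_variance p)%:E.
Proof.
move=> u01; rewrite EFinM -S2E -esumZl; last 2 first.
- by rewrite divr_ge0// sqr_ge0.
- by move=> k; rewrite lee_fin mulr_ge0// ; case: k => [|k]; rewrite ?mul0r// mulr_ge0// -natr1 addrK.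
apply: le_esum => k _; have [h1 h2 _] := phi_bounds k u01.
rewrite -EFinM lee_fin.
have -> : (u ^+ 2 / 2 * (k%:R * (k%:R - 1) * p k) = p k * (k%:R * (k%:R - 1) / 2 * u ^+ 2))%R by field.
exact: (ler_wpM2l (p0 k) h2).
Qed.
End Main3.
Section Main4.
Context (R : realType) (p : nat -> R) (p0 : forall n, (0 <= p n)%R).
Context (p1 : (\esum_(n in [set: nat]) (p n)%:E = 1)%E).
Context (pm : (\esum_(n in [set: nat]) (n%:R * p n)%:E = 1)%E).
Context (hp1 : p 1%N != 1).
Context (hM2 : (offspring_moment2 p < +oo)%E).
Local Open Scope ereal_scope.

Let kk0 (k : nat) : (0 <= k%:R * (k%:R - 1) :> R)%R.
Proof. by case: k => [|k]; rewrite ?mul0r// mulr_ge0// -natr1 addrK. Qed.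

Definition AK K := fine (\esum_(k in [set k | (k < K)%N]) (k%:R * (k%:R - 1) * p k)%:E).

Lemma AK_fin K : \esum_(k in [set k | (k < K)%N]) (k%:R * (k%:R - 1) * p k)%:E = (AK K)%:E.
Proof.
rewrite /AK fineK// ge0_fin_numE ?esum_ge0// => [|k _]; last by rewrite lee_fin mulr_ge0.
apply: (@le_lt_trans _ _ (\esum_(k in [set: nat]) (k%:R * (k%:R - 1) * p k)%:E)).
  by apply: esum_sub => // k; rewrite lee_fin mulr_ge0.
by rewrite (S2E p0 pm hM2) ltry.
Qed.

Lemma H_ge_trunc K u : (0 <= u <= 1)%R -> (K%:R * u <= 1)%R ->
  (AK K * (u ^+ 2 / 2 * (1 - K%:R * u)))%:E <= \esum_(k in [set: nat]) (p k * phi k u)%:E.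
Proof.
move=> u01 Ku; have /andP[u0 u1] := u01.
have c0 : (0 <= u ^+ 2 / 2 * (1 - K%:R * u))%R.
  by rewrite mulr_ge0 ?divr_ge0 ?sqr_ge0// subr_ge0.
rewrite EFinM -AK_fin muleC -esumZl//; last by move=> k; rewrite lee_fin mulr_ge0.
apply: (@le_trans _ _ (\esum_(k in [set k | (k < K)%N]) (p k * phi k u)%:E)); last first.
  apply: esum_sub => // k; have [h _ _] := phi_bounds k u01.
  by rewrite lee_fin mulr_ge0.
apply: le_esum => k /= kK; have [_ _ h3] := phi_bounds k u01.
rewrite -EFinM lee_fin.
apply: (@le_trans _ _ (p k * (k%:R * (k%:R - 1) / 2 * u ^+ 2 * (1 - k%:R * u)))%R); last first.
  exact: ler_wpM2l.
have -> : (u ^+ 2 / 2 * (1 - K%:R * u) * (k%:R * (k%:R - 1) * p k) =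
   p k * (k%:R * (k%:R - 1) / 2 * u ^+ 2 * (1 - K%:R * u)))%R by field.
apply: ler_wpM2l => //; apply: ler_wpM2l; first by rewrite mulr_ge0 ?divr_ge0 ?sqr_ge0.
rewrite lerB// ler_wpM2r// ler_nat; exact: ltnW.
Qed.

Lemma T_ge x y u : (0 <= u <= 1)%R -> (0 <= x)%R -> (1 <= y)%R -> (x * y * u <= 1)%R ->
  ((1 - x * y * u) * (Fbar p x - Fbar p (x * y)))%:E <=
  \esum_(k in [set k | (x < k%:R)%R]) (p k * (1 - u) ^+ k)%:E.
Proof.
move=> u01 x0 y1 xyu; have /andP[u0 u1] := u01.
have xxy : (x <= x * y)%R by rewrite ler_peMr.
have hS : \esum_(k in [set k | (x < k%:R)%R /\ (k%:R <= x * y)%R]) (p k)%:E =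
   (Fbar p x - Fbar p (x * y))%:E.
  have := Fb_fin p0 p1 x; rewrite (esumID [set k | (k%:R <= x * y)%R]); last by move=> k _; rewrite lee_fin.
  rewrite (_ : [set k | (x < k%:R)%R] `&` ~` [set k | (k%:R <= x * y)%R] = [set k | (x * y < k%:R)%R]); last first.
    apply/seteqP; split => k /=.
      by move=> [_ /negP]; rewrite -ltNge.
    move=> xyk; split; first exact: le_lt_trans xyk.
    by apply/negP; rewrite -ltNge.
  rewrite (Fb_fin p0 p1) => E; rewrite EFinB -E addeK//.
have m0 : (0 <= 1 - x * y * u)%R by rewrite subr_ge0.
apply: (@le_trans _ _ (\esum_(k in [set k | (x < k%:R)%R /\ (k%:R <= x * y)%R]) (p k * (1 - u) ^+ k)%:E)); last first.
  apply: esum_sub => [k /= []//|k]; rewrite lee_fin mulr_ge0// exprn_ge0//; lra.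
rewrite EFinM -hS -esumZl; [|exact: m0|by move=> k; rewrite lee_fin].
apply: le_esum => k /= [xk kxy]; rewrite -EFinM lee_fin mulrC ler_wpM2l//.
have /andP[_ B] := bk_bounds k u01.
have : (k%:R * u <= x * y * u)%R by rewrite ler_wpM2r.
lra.
Qed.
End Main4.
Section Main5.
Context (R : realType) (p : nat -> R) (p0 : forall n, (0 <= p n)%R).
Context (p1 : (\esum_(n in [set: nat]) (p n)%:E = 1)%E).
Context (pm : (\esum_(n in [set: nat]) (n%:R * p n)%:E = 1)%E).
Context (hp1 : p 1%N != 1).
Context (hM2 : (offspring_moment2 p < +oo)%E).
Local Open Scope ereal_scope.

Let kk0 (k : nat) : (0 <= k%:R * (k%:R - 1) :> R)%R.
Proof. by case: k => [|k]; rewrite ?mul0r// mulr_ge0// -natr1 addrK. Qed.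

Lemma AK_approx e : (0 < e)%R -> exists K, (offspring_variance p - e <= AK p K)%R.
Proof.
move=> e0.
have a0 k : 0 <= (k%:R * (k%:R - 1) * p k)%:E by rewrite lee_fin mulr_ge0.
have := @esum_tail R (fun k => (k%:R * (k%:R - 1) * p k)%:E) a0.
rewrite (S2E p0 pm hM2) ltry => /(_ isT e e0) [N HN].
exists N; rewrite lerBlDr -lee_fin -(S2E p0 pm hM2) EFinD.
rewrite (esumID [set k | (k < N)%N]); last by move=> k _; rewrite lee_fin mulr_ge0.
rewrite setTI (AK_fin p0 pm hM2) leeD2l//; apply: le_trans HN.
apply: esum_sub => [k /= kN|k]; last by rewrite lee_fin mulr_ge0.
by case: kN => _ /negP; rewrite -leqNgt.
Qed.

Lemma x2F e : (0 < e)%R -> exists M : R, forall x, (M <= x)%R -> (x ^+ 2 * Fbar p x <= e)%R.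
Proof.
move=> e0.
have a0 k : 0 <= ((k ^ 2)%:R * p k)%:E by rewrite lee_fin mulr_ge0.
have := @esum_tail R (fun k => ((k ^ 2)%:R * p k)%:E) a0.
move: hM2; rewrite /offspring_moment2 => hM2' /(_ hM2' e e0) [N HN].
exists N%:R => x Nx; have x0 : (0 <= x)%R by apply: le_trans Nx.
rewrite -lee_fin EFinM -(Fb_fin p0 p1) -esumZl; [|exact: sqr_ge0|by move=> k; rewrite lee_fin].
apply: le_trans HN; apply: (@le_trans _ _ (\esum_(k in [set k | (x < k%:R)%R]) ((k ^ 2)%:R * p k)%:E)).
  apply: le_esum => k /= xk; rewrite -EFinM lee_fin ler_wpM2r// natrX.
  by rewrite ler_pXn2r// ?nnegrE// ltW.
apply: esum_sub => [k /= xk|k]; last by rewrite lee_fin mulr_ge0.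
by rewrite -(ler_nat R) ltW// (le_lt_trans Nx).
Qed.

Lemma B1 x K : (2 <= K)%N -> (p K * gw_max_tail p x ^+ 2 <= Fbar p x)%R.
Proof.
move=> K2; have [u01 hk] := key p0 p1 pm hp1 x.
rewrite -lee_fin; apply: le_trans (H_ge_pK p0 u01 K2) _.
by rewrite hk (T_le p0 p1).
Qed.

Lemma B2 x K : (K%:R * gw_max_tail p x <= 1)%R ->
  (AK p K * (gw_max_tail p x ^+ 2 / 2 * (1 - K%:R * gw_max_tail p x)) <= Fbar p x)%R.
Proof.
move=> Ku; have [u01 hk] := key p0 p1 pm hp1 x.
rewrite -lee_fin; apply: le_trans (H_ge_trunc p0 pm hM2 u01 Ku) _.
by rewrite hk (T_le p0 p1).
Qed.

Lemma B3 x y : (0 <= x)%R -> (1 <= y)%R -> (x * y * gw_max_tail p x <= 1)%R ->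
  ((1 - x * y * gw_max_tail p x) * (Fbar p x - Fbar p (x * y)) <=
   gw_max_tail p x ^+ 2 / 2 * offspring_variance p)%R.
Proof.
move=> x0 y1 xyu; have [u01 hk] := key p0 p1 pm hp1 x.
rewrite -lee_fin; apply: le_trans (T_ge p0 p1 u01 x0 y1 xyu) _.
by rewrite -hk (H_le p0 pm hM2).
Qed.
End Main5.
Lemma limf_esup_lt (R : realType) (f : R -> \bar R) (a : R) :
  (limf_esup f (pinfty_nbhs R) < a%:E)%E ->
  exists M : R, forall x, M < x -> (f x < a%:E)%E.
Proof.
rewrite limf_esupE => /ereal_inf_lt [z [V [M [_ HM]] <-] hz].
exists M => x Mx; apply: le_lt_trans hz.
by apply: ereal_sup_ubound; exists x => //; apply: HM.
Qed.

Lemma s_pos (R : realType) (p : nat -> R) (p0 : forall n, (0 <= p n)%R)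
  (p1 : (\esum_(n in [set: nat]) (p n)%:E = 1)%E)
  (pm : (\esum_(n in [set: nat]) (n%:R * p n)%:E = 1)%E)
  (hp1 : p 1%N != 1) (hM2 : (offspring_moment2 p < +oo)%E) :
  0 < offspring_variance p.
Proof.
have kk0 (k : nat) : (0 <= k%:R * (k%:R - 1) :> R)%R.
  by case: k => [|k]; rewrite ?mul0r// mulr_ge0// -natr1 addrK.
have [K [K2 pK]] := K_exists p0 pm hp1.
rewrite -lte_fin -(S2E p0 pm hM2).
have hpos : (0 < K%:R * (K%:R - 1) * p K :> R)%R.
  rewrite mulr_gt0// mulr_gt0// ?ltr0n ?subr_gt0 ?ltr1n//; exact: leq_trans K2.
apply: (@lt_le_trans _ _ (K%:R * (K%:R - 1) * p K)%:E); first by rewrite lte_fin.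
apply: (@le_trans _ _ (\esum_(k in [set K]) (k%:R * (k%:R - 1) * p k)%:E)%E).
  by rewrite esum_set1// lee_fin ltW.
by apply: esum_sub => // k; rewrite lee_fin mulr_ge0.
Qed.
Unset Implicit Arguments.
Theorem lemma1 (R : realType) (p : nat -> R) :
  is_prob_nat p ->
  offspring_mean p = 1%E ->
  p 1%N != 1 ->
  (offspring_moment2 p < +oo)%E ->
  (forall x : R, 0 < x -> 0 < Fbar p x) ->
  (fun y : R => limf_esup (fun x : R => (Fbar p (x * y) / Fbar p x)%:E)
                          (pinfty_nbhs R)) @ +oo --> (0 : \bar R)%E ->
  (fun x : R => gw_max_tail p x / Num.sqrt (2 * Fbar p x / offspring_variance p))
    @ +oo --> (1 : R).
Proof.
move=> [p0 p1] pm hp1 hM2 Fpos hlim.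
rewrite /offspring_mean in pm.
have s0 := s_pos p0 p1 pm hp1 hM2.
set s := offspring_variance p in s0 *.
have [K0 [K02 pK0]] := K_exists p0 pm hp1.
apply/cvgrPdist_le => e e0.
pose d := Num.min e 1 / 5.
have d0 : 0 < d by rewrite divr_gt0// lt_min e0 ltr01.
have d15 : d <= 1 / 5 by rewrite ler_pM2r// ge_min lexx orbT.
have de : 5 * d <= e by rewrite /d mulrC divfK// ge_min lexx.
have [K1 hK1] := AK_approx p0 pm hM2 (mulr_gt0 s0 d0).
have [Y [_ hY]] := ev_lt hlim d0.
pose y := Num.max (Y + 1) 1.
have y1 : 1 <= y by rewrite le_max lexx orbT.
have Yy : Y < y by rewrite lt_max ltrDl ltr01.
have [M1 hM1] := limf_esup_lt (hY y Yy).
have y0 : 0 < y by apply: lt_le_trans y1.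
pose e1 := p K0 * (d / y) ^+ 2.
have e10 : 0 < e1 by rewrite mulr_gt0// exprn_gt0// divr_gt0.
have [M2 hM2'] := x2F p0 p1 hM2 e10.
exists (Num.max (Num.max M1 M2) (Num.max K1%:R 1)); split; first by rewrite num_real.
move=> x; rewrite !gt_max => /andP[/andP[M1x M2x] /andP[K1x x1]].
have x0 : 0 < x by apply: lt_trans x1.
have [u01 _] := key p0 p1 pm hp1 x.
set u := gw_max_tail p x in u01 *.
have /andP[u0 u1] := u01.
set F := Fbar p x.
have F0 : 0 < F := Fpos x x0.
have hB1 : p K0 * u ^+ 2 <= F := B1 p0 p1 pm hp1 x K02.
have hx2 : x ^+ 2 * F <= e1 := hM2' x (ltW M2x).
have xu : x * u <= d / y.
  have h : (x * u) ^+ 2 <= (d / y) ^+ 2.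
    rewrite -(ler_pM2l pK0); apply: le_trans hx2.
    by rewrite exprMn mulrCA ler_wpM2l// sqr_ge0.
  have a0 : 0 <= x * u by rewrite mulr_ge0// ltW.
  have b0 : 0 <= d / y by rewrite divr_ge0// ltW.
  move: h a0 b0; set a := x * u; set b := d / y => h a0 b0; nra.
have xyu : x * y * u <= d.
  have -> : x * y * u = y * (x * u) by ring.
  apply: le_trans (ler_wpM2l (ltW y0) xu) _.
  by rewrite mulrC divfK ?gt_eqF.
have K1u : K1%:R * u <= d.
  apply: le_trans (le_trans _ xu) _; first by rewrite ler_wpM2r// ltW.
  by rewrite ler_pdivrMr// ler_peMr// ltW.
have K1u1 : K1%:R * u <= 1 by lra.
have hB2 := B2 p0 p1 pm hp1 hM2 (x:=x) (K:=K1) K1u1.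
have hU : s * ((1 - d) * u) ^+ 2 <= 2 * F.
  have c1 : 0 <= s - s * d by nra.
  have c2 : 0 <= u ^+ 2 / 2 * (1 - d) by rewrite mulr_ge0 ?divr_ge0 ?sqr_ge0//; lra.
  have c3 : u ^+ 2 / 2 * (1 - d) <= u ^+ 2 / 2 * (1 - K1%:R * u).
    by rewrite ler_wpM2l ?divr_ge0 ?sqr_ge0//; lra.
  have := ler_pM c1 c2 hK1 c3.
  have -> : s * ((1 - d) * u) ^+ 2 = 2 * ((s - s * d) * (u ^+ 2 / 2 * (1 - d))) by field.
  move: hB2; rewrite -/F; set A := AK p K1 * _; set B := (s - s * d) * _; lra.
have xyu1 : x * y * u <= 1 by lra.
have hB3 := B3 p0 p1 pm hp1 hM2 (x:=x) (y:=y) (ltW x0) y1 xyu1.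
have hr := hM1 x M1x; rewrite lte_fin ltr_pdivrMr// in hr.
have hL : 2 * F * (1 - d) ^+ 2 <= s * u ^+ 2.
  have c1 : 0 <= 1 - d by lra.
  have c2 : 0 <= (1 - d) * F by rewrite mulr_ge0// ltW.
  have c3 : 1 - d <= 1 - x * y * u by lra.
  have c4 : (1 - d) * F <= F - Fbar p (x * y) by move: hr; rewrite -/F; nra.
  have := ler_pM c1 c2 c3 c4.
  move: hB3; set A := (1 - x * y * u) * _; move=> hB3 h.
  have -> : 2 * F * (1 - d) ^+ 2 = 2 * ((1 - d) * ((1 - d) * F)) by ring.
  have -> : s * u ^+ 2 = 2 * (u ^+ 2 / 2 * s) by field.
  move: h hB3; set B := (1 - d) * _; set C := u ^+ 2 / 2 * s; lra.
have q0 : 0 <= 2 * F / s by rewrite divr_ge0// ?mulr_ge0// ltW.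
have a0 : 0 < Num.sqrt (2 * F / s) by rewrite sqrtr_gt0 divr_gt0// mulr_gt0.
have a2 : Num.sqrt (2 * F / s) ^+ 2 = 2 * F / s by rewrite sqr_sqrtr.
set a := Num.sqrt (2 * F / s) in a0 a2 *.
have h1 : (1 - d) * u <= a.
  have : ((1 - d) * u) ^+ 2 <= a ^+ 2 by rewrite a2 ler_pdivlMr// mulrC.
  have b0 : 0 <= (1 - d) * u by rewrite mulr_ge0//; lra.
  move: b0; set b := (1 - d) * u => b0 h; nra.
have h2 : (1 - d) * a <= u.
  have : ((1 - d) * a) ^+ 2 <= u ^+ 2.
    rewrite exprMn a2 mulrA ler_pdivrMr//; lra.
  have b0 : 0 <= (1 - d) * a by rewrite mulr_ge0 ?ltW//; lra.
  move: b0; set b := (1 - d) * a => b0 h; nra.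
have r1 : 1 - d <= u / a by rewrite ler_pdivlMr.
have r2 : (1 - d) * (u / a) <= 1 by rewrite mulrA ler_pdivrMr// mul1r.
have r0 : 0 <= u / a by rewrite divr_ge0// ltW.
move: r0 r1 r2; set r := u / a => r0 r1 r2.
rewrite /= -/u -/F -/s -/a -/r ler_norml; apply/andP; split; nra.
Qed.
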